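(* Let $(G,\omega)$ be a weighted graph of genus $g=g(G,\omega)$. Then: (1) for every $D\in\operatorname{Div}(G,\omega)$, $r_{(G,\omega)}(D)-r_{(G,\omega)}(K_{(G,\omega)}-D)=\deg D-g+1$; (2) for every $D,D'\in\operatorname{Div}(G)$ with $D\sim D'$ (linear equivalence on $G$), $r_{(G,\omega)}(D)=r_{(G,\omega)}(D')$.
   Context: Graphs are finite and connected, loops and multiple edges allowed. $\operatorname{Div}(G)$ is the free abelian group on $V(G)$. Define $(v\cdot w)$ as the number of edges joining $v,w$ if $v\ne w$, and $(v\cdot v)=-\operatorname{val}(v)+2\operatorname{loop}(v)$ (valency with loops counted twice). $T_v=\sum_w(v\cdot w)w$, $\operatorname{Prin}(G)$ is generated by the $T_v$, $D\sim D'$ iff $D-D'\in\operatorname{Prin}(G)$. The rank $r_G(D)$ is $-1$ if no effective divisor is equivalent to $D$, and otherwise the maximum $k\ge0$ such that for every effective $E$ of degree $k$ some effective divisor is equivalent to $D-E$. For a graph $H$ with loops, $\widehat H$ is obtained by inserting one new vertex in each loop-edge, and $r^{\#}_H(D):=r_{\widehat H}(D)$ (divisor extended by zero). A weighted graph is a pair $(G,\omega)$ with $\omega:V(G)\to\mathbb{Z}_{\ge0}$; its genus is $g(G,\omega)=b_1(G)+\sum_v\omega(v)$, where $b_1(G)=|E|-|V|+1$. The virtual graph $G^\omega$ is obtained from $G$ by attaching $\omega(v)$ new loops at each vertex $v$; $V(G^\omega)=V(G)$ and $\operatorname{Div}(G,\omega):=\operatorname{Div}(G^\omega)=\operatorname{Div}(G)$.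 Set $K_{(G,\omega)}=\sum_{v}(\operatorname{val}_{G^\omega}(v)-2)v$ and $r_{(G,\omega)}(D):=r^{\#}_{G^\omega}(D)$. *)

(* Defs.v *)
From HB Require Import structures.
From mathcomp Require Import all_boot all_order all_algebra.
From Stdlib Require Import ClassicalEpsilon.
Set Implicit Arguments. Unset Strict Implicit. Unset Printing Implicit Defensive.
Import Order.TTheory GRing.Theory Num.Theory.
Local Open Scope ring_scope.

(* A finite multigraph: vertex set, edge set, and the (unordered) pair of
   endpoints of each edge, recorded as an ordered pair. A loop is an edge
   whose two endpoints coincide. *)
Record mgraph := MGraph {
  vtx : finType;
  edg : finType;
  ends : edg -> vtx * vtx
}.

Section Graph.
Variable G : mgraph.

Definition is_loop (e : edg G) : bool := (ends e).1 == (ends e).2.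

Definition adj (v w : vtx G) : bool :=
  [exists e : edg G, (ends e == (v, w)) || (ends e == (w, v))].

Definition connected : Prop :=
  (0 < #|vtx G|)%N /\ forall v w : vtx G, connect adj v w.

(* valency, loops counted twice *)
Definition valency (v : vtx G) : nat :=
  (\sum_(e : edg G) (((ends e).1 == v) + ((ends e).2 == v)))%N.

Definition nloops (v : vtx G) : nat := #|[pred e : edg G | ends e == (v, v)]|.

Definition inter (v w : vtx G) : int :=
  if v == w then - (valency v)%:Z + 2 * (nloops v)%:Z
  else (#|[pred e : edg G | (ends e == (v, w)) || (ends e == (w, v))]|)%:Z.

Definition divisor := vtx G -> int.

Definition deg (D : divisor) : int := \sum_(v : vtx G) D v.

Definition effective (D : divisor) : Prop := forall v, 0 <= D v.

Definition Tdiv (v : vtx G) : divisor := fun w => inter v w.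

Definition principal (P : divisor) : Prop :=
  exists c : vtx G -> int, forall w, P w = \sum_(v : vtx G) c v * Tdiv v w.

Definition lin_equiv (D D' : divisor) : Prop :=
  principal (fun w => D w - D' w).

Definition equiv_effective (D : divisor) : Prop :=
  exists F : divisor, effective F /\ lin_equiv D F.

Definition rank_prop (D : divisor) (k : nat) : Prop :=
  forall E : divisor, effective E -> deg E = k%:Z ->
    equiv_effective (fun v => D v - E v).

Definition is_rank (D : divisor) (r : int) : Prop :=
  (~ equiv_effective D /\ r = -1) \/
  (equiv_effective D /\ exists k : nat, r = k%:Z /\ rank_prop D k /\
      forall k' : nat, rank_prop D k' -> (k' <= k)%N).

Definition rank (D : divisor) : int :=
  epsilon (inhabits 0) (is_rank D).

End Graph.

(* \hat H : insert one new vertex in each loop-edge of H *)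
Definition loop_edge (H : mgraph) := {e : edg H | is_loop e}.

Definition hat_ends (H : mgraph) (e : (edg H + loop_edge H)%type)
  : (vtx H + loop_edge H) * (vtx H + loop_edge H) :=
  match e with
  | inl e0 =>
      match (insub e0 : option (loop_edge H)) with
      | Some l => (inl (ends e0).1, inr l)
      | None => (inl (ends e0).1, inl (ends e0).2)
      end
  | inr l => (inr l, inl (ends (val l)).1)
  end.

Definition hat (H : mgraph) : mgraph :=
  @MGraph (vtx H + loop_edge H)%type (edg H + loop_edge H)%type (@hat_ends H).

Definition hat_ext (H : mgraph) (D : divisor H) : divisor (hat H) :=
  fun x => match x with inl v => D v | inr _ => 0 end.

Definition rank_sharp (H : mgraph) (D : divisor H) : int :=
  rank (hat_ext D).

Definition new_loops (G : mgraph) (om : vtx G -> nat) :=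
  {v : vtx G & 'I_(om v)}.

Definition virt_ends (G : mgraph) (om : vtx G -> nat)
  (e : (edg G + new_loops om)%type) : vtx G * vtx G :=
  match e with
  | inl e0 => ends e0
  | inr l => (tag l, tag l)
  end.

(* the virtual graph G^omega: omega(v) new loops attached at v *)
Definition virt (G : mgraph) (om : vtx G -> nat) : mgraph :=
  @MGraph (vtx G) (edg G + new_loops om)%type (@virt_ends G om).

Definition b1 (G : mgraph) : int := (#|edg G|)%:Z - (#|vtx G|)%:Z + 1.

Definition wgenus (G : mgraph) (om : vtx G -> nat) : int :=
  b1 G + \sum_(v : vtx G) (om v)%:Z.

Definition wcanonical (G : mgraph) (om : vtx G -> nat) : divisor G :=
  fun v => (@valency (virt om) v)%:Z - 2.

Definition wrank (G : mgraph) (om : vtx G -> nat) (D : divisor G) : int :=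
  @rank_sharp (virt om) D.

(* Main.v *)
Require Import Defs.
From HB Require Import structures.
From mathcomp Require Import all_boot all_order all_algebra.
From Stdlib Require Import Classical ClassicalEpsilon FunctionalExtensionality PropExtensionality.
From mathcomp Require Import zify ring lra.
Set Implicit Arguments. Unset Strict Implicit. Unset Printing Implicit Defensive.
Import Order.TTheory GRing.Theory Num.Theory.
Local Open Scope ring_scope.


Lemma sum_pred1n (T : finType) (b : T) : (\sum_(w : T) ((w == b) : nat) = 1)%N.
Proof. by rewrite (bigD1 b) //= eqxx big1 // => w /negbTE ->. Qed.

Lemma card_sumE (T : finType) (P : pred T) : #|[pred x | P x]| = (\sum_x (P x : nat))%N.
Proof. by rewrite -sum1_card big_mkcond /=; apply: eq_bigr => x _; rewrite inE; case: (P x). Qed.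

Section Gen.
Variable G : mgraph.
Local Notation V := (vtx G).

Definition mult (v w : V) : nat :=
  #|[pred e : edg G | (ends e == (v, w)) || (ends e == (w, v))]|.
Definition mm (v w : V) : nat := if v == w then 0%N else mult v w.
Definition dg (v : V) : nat := (\sum_w mm v w)%N.

Lemma mult_sym v w : mult v w = mult w v.
Proof. by rewrite /mult; apply: eq_card => e; rewrite !inE orbC. Qed.

Lemma mm_sym v w : mm v w = mm w v.
Proof. by rewrite /mm eq_sym mult_sym. Qed.

Lemma mm_diag v : mm v v = 0%N.
Proof. by rewrite /mm eqxx. Qed.

Lemma valency_mm v : valency v = (dg v + 2 * nloops v)%N.
Proof.
rewrite /valency /dg /nloops card_sumE.
have -> : (\sum_w mm v w = \sum_w \sum_e ((w != v) && ((ends e == (v, w)) || (ends e == (w, v))) : nat))%N.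
  apply: eq_bigr => w _; rewrite /mm /mult card_sumE eq_sym.
  by case: (w == v) => //=; rewrite big1.
rewrite exchange_big /= big_distrr -big_split /=; apply: eq_bigr => e _.
case: (ends e) => a b /=.
under eq_bigr do rewrite !xpair_eqE.
rewrite xpair_eqE.
have [av|av] := eqVneq a v; have [bv|bv] := eqVneq b v => /=.
- by rewrite big1 // => w _; rewrite av bv; case: (eqVneq w v).
- rewrite muln0 addn0 (eq_bigr (fun w => (w == b) : nat)) ?sum_pred1n // => w _.
  by rewrite andbF orbF; case: (eqVneq w b) => [->|wb]; rewrite ?bv ?andbF.
- rewrite muln0 addn0 (eq_bigr (fun w => (w == a) : nat)) ?sum_pred1n // => w _.
  by rewrite andbT; case: (eqVneq w a) => [->|wa]; rewrite ?av ?andbF.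
- by rewrite muln0 addn0 big1 // => w _; rewrite !andbF.
Qed.

Lemma inter_mm v w :
  inter v w = (mm v w)%:Z - (v == w)%:Z * (dg v)%:Z.
Proof.
rewrite /inter /mm; case: (eqVneq v w) => [_|_] /=.
  rewrite valency_mm PoszD PoszM mul1r; lia.
by rewrite mul0r subr0.
Qed.

Definition lap (c : V -> int) (w : V) : int := \sum_v (mm v w)%:Z * (c v - c w).

Lemma dg_sym w : dg w = (\sum_v mm v w)%N.
Proof. by apply: eq_bigr => v _; rewrite mm_sym. Qed.

Lemma principalP (P : divisor G) :
  principal P <-> exists c, forall w, P w = lap c w.
Proof.
have E : forall c w, \sum_v c v * Tdiv v w = lap c w.
  move=> c w; rewrite /lap /Tdiv.
  under eq_bigr do rewrite inter_mm mulrBr.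
  under [in RHS]eq_bigr do rewrite mulrBr.
  rewrite !sumrB; congr (_ - _); first by apply: eq_bigr => v _; rewrite mulrC.
  rewrite (bigD1 w) //= big1 ?addr0; last by move=> v /negbTE ->; rewrite /= mul0r mulr0.
  rewrite eqxx mul1r dg_sym mulrC -mulr_suml.
  by rewrite (big_morph Posz PoszD (erefl _)).
split=> [[c Hc]|[c Hc]]; exists c => w; by rewrite Hc E.
Qed.
End Gen.


Section Basic.
Variable H : mgraph.
Local Notation V := (vtx H).
Implicit Types D E F : divisor H.

Lemma principal_add (P P1 P2 : divisor H) : principal P1 -> principal P2 ->
  (forall w, P w = P1 w + P2 w) -> principal P.
Proof.
move=> /principalP[c1 H1] /principalP[c2 H2] HP; apply/principalP.
exists (fun v => c1 v + c2 v) => w; rewrite HP H1 H2 /lap -big_split /=.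
by apply: eq_bigr => v _; rewrite -mulrDr; congr (_ * _); ring.
Qed.

Lemma principal_opp (P P1 : divisor H) : principal P1 ->
  (forall w, P w = - P1 w) -> principal P.
Proof.
move=> /principalP[c1 H1] HP; apply/principalP.
exists (fun v => - c1 v) => w; rewrite HP H1 /lap -sumrN.
by apply: eq_bigr => v _; rewrite -mulrN; congr (_ * _); ring.
Qed.

Lemma principal0 (P : divisor H) : (forall w, P w = 0) -> principal P.
Proof.
move=> HP; apply/principalP; exists (fun _ => 0) => w.
by rewrite HP /lap big1 // => v _; rewrite subr0 mulr0.
Qed.

Lemma principal_ext (P P1 : divisor H) : principal P1 ->
  (forall w, P w = P1 w) -> principal P.
Proof.
move=> HP1 E; apply: (principal_add HP1 (principal0 (P := fun _ => 0) (fun _ => erefl))).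
by move=> w; rewrite E addr0.
Qed.

Lemma lin_equiv_refl D : lin_equiv D D.
Proof. by apply: principal0 => w; rewrite subrr. Qed.

Lemma lin_equiv_sym D D' : lin_equiv D D' -> lin_equiv D' D.
Proof. by move=> HD; apply: (principal_opp HD) => w; rewrite opprB. Qed.

Lemma lin_equiv_trans D1 D2 D3 : lin_equiv D1 D2 -> lin_equiv D2 D3 -> lin_equiv D1 D3.
Proof. by move=> H1 H2; apply: (principal_add H1 H2) => w; ring. Qed.

Lemma lin_equiv_ext D1 D2 E1 E2 : lin_equiv D1 D2 ->
  (forall v, E1 v = D1 v) -> (forall v, E2 v = D2 v) -> lin_equiv E1 E2.
Proof. by move=> HD h1 h2; apply: (principal_ext HD) => w; rewrite h1 h2. Qed.

Lemma lin_equiv_eq D1 D2 : (forall v, D1 v = D2 v) -> lin_equiv D1 D2.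
Proof. by move=> E; apply: principal0 => w; rewrite E subrr. Qed.

Lemma deg_lap (c : V -> int) : \sum_w lap c w = 0.
Proof.
rewrite /lap.
have E : \sum_w \sum_v (mm v w)%:Z * (c v - c w) = - \sum_w \sum_v (mm v w)%:Z * (c v - c w).
  rewrite {1}exchange_big -[in RHS]sumrN; apply: eq_bigr => w _; rewrite -[in RHS]sumrN.
  by apply: eq_bigr => v _; rewrite mm_sym -mulrN opprB.
move: E; set X := \sum_w _ => E.
have : X + X = 0 by rewrite {1}E addNr.
by rewrite -mulr2n -mulr_natr; move/eqP; rewrite mulf_eq0 /= => /orP[/eqP|//].
Qed.

Lemma deg_principal (P : divisor H) : principal P -> deg P = 0.
Proof.
move=> /principalP[c Hc]; rewrite /deg.
transitivity (\sum_w lap c w); last exact: deg_lap.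
by apply: eq_bigr => w _; exact: Hc.
Qed.

Lemma deg_sub D E : deg (fun v => D v - E v) = deg D - deg E.
Proof. by rewrite /deg sumrB. Qed.

Lemma lin_equiv_deg D D' : lin_equiv D D' -> deg D = deg D'.
Proof. by move/deg_principal; rewrite deg_sub => /eqP; rewrite subr_eq0 => /eqP. Qed.

Lemma equiv_eff_lin D D' : lin_equiv D D' -> equiv_effective D -> equiv_effective D'.
Proof.
move=> HD [F [HF HDF]]; exists F; split => //.
exact: lin_equiv_trans (lin_equiv_sym HD) HDF.
Qed.

Lemma equiv_eff_ext D D' : (forall v, D v = D' v) -> equiv_effective D -> equiv_effective D'.
Proof. by move=> E; apply: equiv_eff_lin; apply: lin_equiv_eq. Qed.

Lemma rank_prop_lin D D' k : lin_equiv D D' -> rank_prop D k -> rank_prop D' k.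
Proof.
move=> HD Hr E HE dE; apply: (equiv_eff_lin _ (Hr E HE dE)).
by apply: (principal_ext HD) => w /=; ring.
Qed.

Lemma is_rank_uniq D r1 r2 : is_rank D r1 -> is_rank D r2 -> r1 = r2.
Proof.
case=> [[Hn ->]|[He [k1 [-> [Hk1 Hm1]]]]]; case=> [[Hn' ->]|[He' [k2 [-> [Hk2 Hm2]]]]].
- by [].
- by case: Hn.
- by case: Hn'.
- by congr Posz; apply/eqP; rewrite eqn_leq Hm1 // Hm2.
Qed.

Lemma rank_eq D r : is_rank D r -> rank D = r.
Proof.
move=> Hr; rewrite /rank; apply: is_rank_uniq (Hr).
by apply: (epsilon_spec (inhabits 0) (is_rank D)); exists r.
Qed.

Lemma is_rank_lin D D' r : lin_equiv D D' -> is_rank D r -> is_rank D' r.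
Proof.
move=> HD [[Hn ->]|[He [k [-> [Hk Hm]]]]].
  by left; split => //; move/(equiv_eff_lin (lin_equiv_sym HD)).
right; split; first exact: equiv_eff_lin He.
exists k; split => //; split; first exact: rank_prop_lin Hk.
by move=> k' /(rank_prop_lin (lin_equiv_sym HD)); apply: Hm.
Qed.

Lemma rank_lin D D' : lin_equiv D D' -> rank D = rank D'.
Proof.
move=> HD; rewrite /rank; congr (epsilon _); apply: functional_extensionality => r.
apply: propositional_extensionality; split; apply: is_rank_lin => //.
exact: lin_equiv_sym.
Qed.

End Basic.


Lemma le_sum_term (T : finType) (F : T -> int) i :
  (forall j, 0 <= F j) -> F i <= \sum_j F j.
Proof.
move=> H0; rewrite (bigD1 i) //= lerDl; apply: sumr_ge0 => j _; exact: H0.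
Qed.

Section Dist.
Variable H : mgraph.
Local Notation V := (vtx H).
Variable q : V.
Hypothesis Hconn : forall v w : V, connect (@adj H) v w.

Fixpoint reachb (n : nat) (v : V) : bool :=
  if n is n'.+1 then reachb n' v || [exists u, reachb n' u && (0 < @mm H u v)%N]
  else v == q.

Lemma adj_mm (x y : V) : adj x y -> x = y \/ (0 < mm x y)%N.
Proof.
case: (eqVneq x y) => [->|nxy]; first by left.
move=> /existsP[e He]; right; rewrite /mm (negbTE nxy) /mult; apply/card_gt0P.
by exists e; rewrite inE.
Qed.

Lemma reach_adj n (u v : V) : reachb n u -> (0 < mm u v)%N -> reachb n.+1 v.
Proof. by move=> Hu Huv /=; apply/orP; right; apply/existsP; exists u; rewrite Hu. Qed.

Lemma reach_ex (v : V) : exists n, reachb n v.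
Proof.
have /connectP[p Hp ->] := Hconn q v.
have : exists n, reachb n q by exists 0%N => /=.
elim: p q Hp => [|y p IHp] x //= /andP[Hxy Hp] [n Hn].
apply: IHp => //; case: (adj_mm Hxy) => [<-|Hm]; first by exists n.
by exists n.+1; apply: reach_adj Hm.
Qed.

Definition dist (v : V) : nat := ex_minn (reach_ex v).

Lemma dist_reach (v : V) : reachb (dist v) v.
Proof. by rewrite /dist; case: ex_minnP. Qed.

Lemma dist_min (v : V) n : reachb n v -> (dist v <= n)%N.
Proof. by rewrite /dist; case: ex_minnP => m _ Hm /Hm. Qed.

Lemma dist_q : dist q = 0%N.
Proof. by apply/eqP; rewrite -leqn0; apply: dist_min => /=. Qed.

Lemma dist0 (v : V) : dist v = 0%N -> v = q.
Proof. by move=> E; have := dist_reach v; rewrite E /= => /eqP. Qed.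

Lemma dist_adj (u v : V) : (0 < mm u v)%N -> (dist v <= (dist u).+1)%N.
Proof. by move=> Huv; apply: dist_min; apply: reach_adj Huv; apply: dist_reach. Qed.

Lemma dist_parent (v : V) : v != q -> exists u, (0 < mm u v)%N /\ (dist u).+1 = dist v.
Proof.
move=> vq; case E: (dist v) => [|n]; first by move: vq; rewrite (dist0 E) eqxx.
have := dist_reach v; rewrite E /= => /orP[Hn|/existsP[u /andP[Hu Huv]]].
  by have := dist_min Hn; rewrite E ltnn.
exists u; split => //; have h1 := dist_min Hu; have h2 := dist_adj Huv.
by apply/eqP; rewrite eqn_leq ltnS h1 /= -ltnS -E.
Qed.

Lemma dist_pos (v : V) : v != q -> (0 < dist v)%N.
Proof. by move=> vq; rewrite lt0n; apply/negP => /eqP/dist0 E; rewrite E eqxx in vq. Qed.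


Lemma lap_ge0 (c : V -> int) w : c w = 0 -> (forall v, 0 <= c v) -> 0 <= lap c w.
Proof.
move=> cw c0; rewrite /lap; apply: sumr_ge0 => v _; rewrite cw subr0.
by apply: mulr_ge0 => //.
Qed.

Lemma lap_ge (c : V -> int) w u : c w = 0 -> (forall v, 0 <= c v) ->
  (mm u w)%:Z * c u <= lap c w.
Proof.
move=> cw c0; rewrite /lap.
have -> : (mm u w)%:Z * c u = (mm u w)%:Z * (c u - c w) by rewrite cw subr0.
apply: (le_sum_term (F := fun v => (mm v w)%:Z * (c v - c w))) => v.
by rewrite cw subr0; apply: mulr_ge0.
Qed.

Lemma principal_lap (c : V -> int) : principal (lap c).
Proof. by apply/principalP; exists c. Qed.

Lemma nonneg_offq (D : divisor H) :
  exists D1, lin_equiv D D1 /\ forall v, v != q -> 0 <= D1 v.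
Proof.
pose N := (\max_(v : V) dist v)%N.
have HN : forall v, (dist v <= N)%N by move=> v; apply: (leq_bigmax v).
suff : forall k, exists D1, lin_equiv D D1 /\ forall v, v != q -> (N < dist v + k)%N -> 0 <= D1 v.
  case/(_ N.+1) => D1 [HD1 H1]; exists D1; split => // v vq; apply: H1 => //.
  by rewrite addnS ltnS leq_addl.
elim=> [|k [D1 [HD1 H1]]].
  exists D; split; first exact: lin_equiv_refl.
  by move=> v _; rewrite addn0 ltnNge HN.
pose n := (N - k)%N.
pose T := (\sum_v `|D1 v|)%N.
pose c := fun x : V => if (dist x < n)%N then T%:Z else 0.
have c0 : forall v, 0 <= c v by move=> v; rewrite /c; case: ifP.
exists (fun w => D1 w + lap c w); split.
  apply: lin_equiv_trans HD1 _.
  apply: (principal_opp (principal_lap c)) => w /=; ring.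
move=> v vq Hv.
have cv : c v = 0.
  rewrite /c ifF //; apply/negbTE; rewrite -leqNgt /n; lia.
case: (ltnP N (dist v + k)) => Hk.
  by apply: addr_ge0; [exact: H1 | exact: lap_ge0].
have Edv : dist v = n by rewrite /n; lia.
have [u [Hu Eu]] := dist_parent vq.
have cu : c u = T%:Z by rewrite /c ifT //; rewrite -Edv -Eu.
have := lap_ge u cv c0; rewrite cu => Hl.
have HT : `|D1 v|%:Z <= T%:Z.
  by rewrite lez_nat /T (bigD1 v) //= leq_addr.
have HT2 : (T%:Z) <= (mm u v)%:Z * T%:Z.
  by rewrite -PoszM lez_nat leq_pmull.
have : - D1 v <= `|D1 v|%:Z by rewrite abszE; apply: ler_normr_lt0 || (rewrite ler_normr lexx orbT).
lia.
Qed.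

End Dist.


Definition pp (x : int) : nat := if x is Posz n then n else 0%N.

Lemma pp_sub x : (pp x)%:Z - (pp (- x))%:Z = x.
Proof. by case: x => [[|n]|n] /=; lia. Qed.

Lemma pp_ge x : x <= (pp x)%:Z.
Proof. by case: x => [n|n] /=; lia. Qed.

Lemma pp_pos x : 0 <= x -> (pp x)%:Z = x.
Proof. by case: x. Qed.

Lemma pp_npos x : x <= 0 -> pp x = 0%N.
Proof. by case: x => [[|n]|n]. Qed.

Lemma pp_le x y : x <= y -> (pp x <= pp y)%N.
Proof. case: x => [n|n]; case: y => [m|m] //=; rewrite ?NegzE; lia. Qed.

Section Core.
Variable H : mgraph.
Local Notation V := (vtx H).
Hypothesis Hll : forall e : edg H, ~~ is_loop e.

Lemma nloops0 (v : V) : nloops v = 0%N.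
Proof.
rewrite /nloops; apply: eq_card0 => e; rewrite inE; apply/negP => /eqP E.
by have := Hll e; rewrite /is_loop E eqxx.
Qed.

Lemma valency_dg (v : V) : valency v = dg v.
Proof. by rewrite valency_mm nloops0 muln0 addn0. Qed.

Lemma handshake : (\sum_(v : V) valency v = 2 * #|edg H|)%N.
Proof.
rewrite /valency exchange_big /= -sum1_card big_distrr /=; apply: eq_bigr => e _.
rewrite big_split /= muln1.
by rewrite (eq_bigr (fun v => (v == (ends e).1) : nat)) ?sum_pred1n;
  [rewrite (eq_bigr (fun v => (v == (ends e).2) : nat)) ?sum_pred1n | ..];
  move=> // v _; rewrite eq_sym.
Qed.

Definition Kc (v : V) : int := (valency v)%:Z - 2.

Definition nu (pi : V -> int) (v : V) : int :=
  (\sum_(w | (pi w < pi v)%R) mm v w)%N%:Z - 1.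

Lemma dg_split (pi : V -> int) (v : V) : injective pi ->
  dg v = (\sum_(w | (pi w < pi v)%R) mm v w + \sum_(w | (pi v < pi w)%R) mm v w)%N.
Proof.
move=> Hpi; rewrite /dg (bigID (fun w => pi w < pi v)) /=; congr (_ + _)%N.
rewrite (bigID (fun w => pi v < pi w)) /= [X in (_ + X)%N]big1 ?addn0.
  by apply: eq_bigl => w; case: (ltrP (pi w) (pi v)) => h /=; rewrite ?(lt_gtF h).
move=> w /andP[h1 h2]; have E : pi w = pi v.
  by apply/eqP; rewrite eq_le !leNgt h1 h2.
by rewrite (Hpi _ _ E) mm_diag.
Qed.

Lemma nu_rev (pi : V -> int) (v : V) : injective pi ->
  Kc v - nu pi v = nu (fun x => - pi x) v.
Proof.
move=> Hpi; rewrite /Kc /nu valency_dg (dg_split v Hpi).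
have -> : (\sum_(w | (- pi w < - pi v)%R) mm v w)%N = (\sum_(w | (pi v < pi w)%R) mm v w)%N.
  by apply: eq_bigl => w; rewrite ltrN2.
rewrite PoszD; ring.
Qed.

Lemma sum_lt_total (pi : V -> int) :
  (\sum_v \sum_(w | (pi w < pi v)%R) mm v w = \sum_v \sum_(w | (pi v < pi w)%R) mm v w)%N.
Proof.
rewrite (exchange_big_dep xpredT) //=; apply: eq_bigr => w _.
by apply: eq_bigr => v _; rewrite mm_sym.
Qed.

Lemma deg_nu (pi : V -> int) : injective pi -> deg (nu pi) = b1 H - 1.
Proof.
move=> Hpi; rewrite /deg /nu sumrB /b1 sumr_const.
have E : (2 * \sum_v \sum_(w | (pi w < pi v)%R) mm v w = 2 * #|edg H|)%N.
  rewrite -handshake mul2n -addnn {2}sum_lt_total -big_split /=.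
  by apply: eq_bigr => v _; rewrite valency_dg (dg_split v Hpi).
have E2 : (\sum_v \sum_(w | (pi w < pi v)%R) mm v w = #|edg H|)%N.
  by apply/eqP; rewrite -(eqn_pmul2l (isT : (0 < 2)%N)) E.
rewrite -(big_morph Posz PoszD (erefl _)) E2.
by rewrite -mulr_natr mul1r; ring.
Qed.

Lemma deg_K : deg Kc = 2 * (b1 H - 1).
Proof.
rewrite /deg /Kc sumrB -(big_morph Posz PoszD (erefl _)) handshake sumr_const /b1.
rewrite PoszM -mulr_natr; ring.
Qed.

Definition degp (X : divisor H) : nat := (\sum_v pp (X v))%N.

Lemma degp_neg (X : divisor H) :
  (degp (fun v => - X v))%:Z = (degp X)%:Z - deg X.
Proof.
rewrite /degp /deg !(big_morph Posz PoszD (erefl _)) -sumrB.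
apply: eq_bigr => v _; have := pp_sub (X v); lia.
Qed.

Lemma nu_not_eff (q : V) (pi : V -> int) : injective pi -> ~ equiv_effective (nu pi).
Proof.
move=> Hpi [F [HF /principalP[c Hc]]].
pose s0 := Order.arg_min q xpredT c.
have Hs0 : forall y, c s0 <= c y by rewrite /s0; case: arg_minP => // s _ Hs y; apply: Hs.
pose s := Order.arg_min s0 (fun x => c x == c s0) pi.
have [Hs1 Hs2] : c s = c s0 /\ forall y, c y = c s0 -> pi s <= pi y.
  rewrite /s; case: arg_minP => //= x /eqP Hx Hm; split => // y /eqP Hy; exact: Hm.
have Hl : (\sum_(w | (pi w < pi s)%R) mm s w)%N%:Z <= lap c s.
  rewrite /lap [X in _ <= X](bigID (fun w => pi w < pi s)) /= -[X in X <= _]addr0.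
  apply: lerD; last by apply: sumr_ge0 => v _; apply: mulr_ge0 => //; rewrite subr_ge0 Hs1.
  rewrite (big_morph Posz PoszD (erefl _)); apply: ler_sum => v Hv.
  rewrite mm_sym -{1}[(mm v s)%:Z]mulr1; apply: ler_wpM2l => //.
  have hv0 : c s0 <= c v := Hs0 v.
  have hne : c v <> c s0 by move=> E; have := Hs2 _ E; rewrite leNgt Hv.
  lia.
have := HF s; have := Hc s; rewrite /nu; lia.
Qed.

End Core.


Lemma leq_sum_sub (T : finType) (P Q : pred T) (F : T -> nat) :
  (forall x, P x -> Q x) -> (\sum_(x | P x) F x <= \sum_(x | Q x) F x)%N.
Proof.
move=> PQ; rewrite big_mkcond [X in (_ <= X)%N]big_mkcond /=; apply: leq_sum => x _.
by case: ifP => // /PQ ->.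
Qed.

Section Dhar.
Variable H : mgraph.
Local Notation V := (vtx H).
Variable q : V.
Hypothesis Hconn : forall v w : V, connect (@adj H) v w.

Definition out (A : {set V}) (v : V) : nat := (\sum_(w | w \notin A) mm w v)%N.

Definition reduced (D : divisor H) : Prop :=
  forall A : {set V}, A != set0 -> q \notin A -> exists2 v, v \in A & D v < (out A v)%:Z.

Lemma dhar (D : divisor H) : reduced D -> forall U : {set V}, q \notin U ->
  exists pi : V -> int, {in U &, injective pi} /\
    (forall v w, v \in U -> w \notin U -> pi w < pi v) /\
    (forall v, v \in U -> D v < (\sum_(w | (pi w < pi v)%R) mm v w)%N%:Z).
Proof.
move=> HR U; move Hn: #|U| => n; elim: n U Hn => [|n IH] U Hn qU.
  have U0 : U = set0 by apply/eqP; rewrite -cards_eq0 Hn.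
  by exists (fun _ => 0); rewrite U0; split; [move=> x y; rewrite inE | split => v; rewrite inE].
have U0 : U != set0 by rewrite -card_gt0 Hn.
have [v vU Hv] := HR U U0 qU.
have HU' : #|U :\ v| = n by rewrite (cardsD1 v U) vU add1n in Hn; case: Hn.
have qU' : q \notin U :\ v by rewrite inE negb_and qU orbT.
have [pi' [Hinj [Hord Hsum]]] := IH _ HU' qU'.
have HvU' : v \notin U :\ v by rewrite !inE eqxx.
pose pi := fun x => if x \in U then pi' x else pi' v - 1.
have Hord2 : forall y w, y \in U -> w \notin U -> pi w < pi y.
  move=> y w yU wU; rewrite /pi yU (negbTE wU).
  case: (eqVneq y v) => [->|yv]; first by rewrite gtrBl.
  have yU' : y \in U :\ v by rewrite !inE yv.
  by apply: lt_trans (Hord _ _ yU' HvU'); rewrite gtrBl.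
exists pi; split; [|split] => //.
- move=> x y xU yU; rewrite /pi xU yU.
  case: (eqVneq x v) => [->|xv]; case: (eqVneq y v) => [->|yv] //.
  + have yU' : y \in U :\ v by rewrite !inE yv.
    by move=> E; have := Hord _ _ yU' HvU'; rewrite E ltxx.
  + have xU' : x \in U :\ v by rewrite !inE xv.
    by move=> E; have := Hord _ _ xU' HvU'; rewrite E ltxx.
  + by apply: Hinj; rewrite !inE ?xv ?yv.
- move=> y yU; case: (eqVneq y v) => [->|yv].
    apply: lt_le_trans Hv _; rewrite lez_nat /out.
    rewrite (eq_bigr (fun w => mm v w)); last by move=> w _; rewrite mm_sym.
    by apply: leq_sum_sub => w wU; apply: Hord2.
  have yU' : y \in U :\ v by rewrite !inE yv.
  rewrite (eq_bigl (fun w => pi' w < pi' y)); first exact: Hsum.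
  move=> w; case: (boolP (w \in U)) => wU.
    by rewrite /pi wU yU.
  have wU' : w \notin U :\ v by rewrite !inE negb_and wU orbT.
  by rewrite (Hord2 _ _ yU wU) (Hord _ _ yU' wU').
Qed.


Lemma not_reduced (X : divisor H) : ~ reduced X ->
  exists A : {set V}, [/\ A != set0, q \notin A & forall v, v \in A -> (out A v)%:Z <= X v].
Proof.
move=> Hn; apply: NNPP => Hn2; apply: Hn => A A0 qA; apply: NNPP => Hn3.
apply: Hn2; exists A; split => // v vA.
by case: (lerP (out A v)%:Z (X v)) => // hlt; case: Hn3; exists v.
Qed.

Local Notation d := (dist q Hconn).

Lemma reduce (D : divisor H) : (forall v, v != q -> 0 <= D v) ->
  exists D', [/\ lin_equiv D D', (forall v, v != q -> 0 <= D' v) & reduced D'].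
Proof.
move=> HD.
pose N := (\max_(v : V) d v)%N.
have HN : forall v, (d v <= N)%N by move=> v; apply: (leq_bigmax v).
pose S := (\sum_(v : V) \sum_(w : V) mm v w)%N.
pose B := S.+1.
pose p := fun v : V => (B ^ (N - d v))%N%:Z.
have p_ge1 : forall v, 1 <= p v by move=> v; rewrite /p lez_nat expn_gt0.
pose Phi := fun X : divisor H => \sum_v X v * p v.
pose C := deg D * (B ^ N)%N%:Z.
have HC : forall X, lin_equiv D X -> (forall v, v != q -> 0 <= X v) -> Phi X <= C.
  move=> X HX Xq; rewrite /C (lin_equiv_deg HX) /deg mulr_suml; apply: ler_sum => v _.
  case: (eqVneq v q) => [->|vq].
    by rewrite /p (dist_q q Hconn) subn0.
  apply: ler_wpM2l; first exact: Xq.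
  by rewrite lez_nat leq_pexp2l // leq_subr.
have step : forall X, lin_equiv D X -> (forall v, v != q -> 0 <= X v) -> ~ reduced X ->
    exists Y, [/\ lin_equiv D Y, (forall v, v != q -> 0 <= Y v) & Phi X < Phi Y].
  move=> X HX Xq /not_reduced [A [A0 qA HA]].
  pose c := fun x : V => (x \in A)%:Z.
  have c0 : forall v, 0 <= c v by move=> v; rewrite /c; case: (v \in A).
  have lapA : forall w, w \in A -> lap c w = - (out A w)%:Z.
    move=> w wA; rewrite /lap /out (bigID (fun v => v \in A)) /= big1 ?add0r.
      rewrite (big_morph Posz PoszD (erefl _)) -sumrN; apply: eq_bigr => v vA.
      by rewrite /c (negbTE vA) wA /= sub0r mulrN1.
    by move=> v vA; rewrite /c vA wA subrr mulr0.
  exists (fun w => X w + lap c w); split.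
  - apply: lin_equiv_trans HX _.
    by apply: (principal_opp (principal_lap c)) => w /=; ring.
  - move=> v vq; case: (boolP (v \in A)) => vA.
      by rewrite lapA // subr_ge0; apply: HA.
    by apply: addr_ge0; [exact: Xq | apply: lap_ge0 => //; rewrite /c (negbTE vA)].
  have [a aA] : exists a, a \in A by apply/set0Pn.
  pose u0 := Order.arg_min a (fun x => x \in A) d.
  have [u0A Hu0] : u0 \in A /\ forall u, u \in A -> (d u0 <= d u)%N.
    by rewrite /u0; case: arg_minP => // x xA Hx; split => // u /Hx.
  have u0q : u0 != q by apply/negP => /eqP E; rewrite -E u0A in qA.
  have [w0 [Hw0 Ew0]] := dist_parent Hconn u0q.
  have w0A : w0 \notin A.
    by apply/negP => /Hu0; rewrite -Ew0 ltnn.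
  have pw0 : p w0 = B%:Z * p u0.
    rewrite /p -PoszM -expnS; congr (Posz (expn _ _)).
    have := HN u0; lia.
  have pA : forall w, w \in A -> p w <= p u0.
    move=> w wA; rewrite /p lez_nat leq_pexp2l //; have := Hu0 _ wA; lia.
  have p0 : forall w, 0 <= p w by move=> w; apply: le_trans (p_ge1 w).
  pose f1 := fun w v => if (v \in A) && (w \notin A) then (mm v w)%:Z * p w else 0.
  have f1_0 : forall w v, 0 <= f1 w v.
    by move=> w v; rewrite /f1; case: ifP => // _; apply: mulr_ge0.
  have pt : forall w v, f1 w v - (mm v w)%:Z * p u0 <= (mm v w)%:Z * (c v - c w) * p w.
    move=> w v; rewrite /f1 /c.
    have hm : 0 <= (mm v w)%:Z by [].
    have hp := p0 w; have hp0 := p_ge1 u0.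
    case: (boolP (v \in A)) => vA; case: (boolP (w \in A)) => wA /=.
    + nia.
    + nia.
    + have := pA w wA; nia.
    + nia.
  have Hsum : Phi (fun w => X w + lap c w) = Phi X + \sum_w lap c w * p w.
    by rewrite /Phi -big_split /=; apply: eq_bigr => w _; rewrite mulrDl.
  rewrite Hsum ltrDl.
  have E1 : \sum_w lap c w * p w = \sum_w \sum_v (mm v w)%:Z * (c v - c w) * p w.
    by apply: eq_bigr => w _; rewrite /lap big_distrl.
  have E2 : \sum_(w : V) \sum_(v : V) (mm v w)%:Z * p u0 = S%:Z * p u0.
    have ES : S%:Z = \sum_(w : V) \sum_(v : V) (mm v w)%:Z.
      have -> : S = (\sum_(w : V) \sum_(v : V) mm v w)%N by rewrite /S; apply: exchange_big.
      rewrite (big_morph Posz PoszD (erefl _)); apply: eq_bigr => w _.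
      by rewrite (big_morph Posz PoszD (erefl _)).
    by rewrite ES mulr_suml; apply: eq_bigr => w _; rewrite mulr_suml.
  have E3 : f1 w0 u0 <= \sum_w \sum_v f1 w v.
    apply: le_trans (le_sum_term (F := fun w => \sum_v f1 w v) w0 _); last first.
      by move=> w; apply: sumr_ge0 => v _.
    exact: (le_sum_term (F := fun v => f1 w0 v) u0 (f1_0 w0)).
  have E4 : \sum_w \sum_v f1 w v - S%:Z * p u0 <= \sum_w lap c w * p w.
    rewrite E1 -E2 -sumrB; apply: ler_sum => w _; rewrite -sumrB; apply: ler_sum => v _.
    exact: pt.
  have E5 : f1 w0 u0 = (mm u0 w0)%:Z * p w0 by rewrite /f1 u0A w0A.
  have E6 : 1 <= (mm u0 w0)%:Z by rewrite mm_sym lez_nat.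
  have E7 : B%:Z = S%:Z + 1 by rewrite /B -addn1 PoszD.
  have hp0 := p_ge1 u0; have hpw0 := p0 w0.
  rewrite pw0 E7 in E5 hpw0; nia.
suff : forall n X, C - Phi X <= n%:Z -> lin_equiv D X -> (forall v, v != q -> 0 <= X v) ->
  exists D', [/\ lin_equiv D D', (forall v, v != q -> 0 <= D' v) & reduced D'].
  move=> /(_ `|C - Phi D|%N D); apply.
  - by rewrite abszE ler_norm.
  - exact: lin_equiv_refl.
  - exact: HD.
elim=> [|n IH] X HXn HX Xq; case: (classic (reduced X)) => HR; first by exists X.
- have [Y [HY Yq HXY]] := step X HX Xq HR.
  have := HC Y HY Yq; lra.
- by exists X.
- have [Y [HY Yq HXY]] := step X HX Xq HR.
  apply: (IH Y) => //; rewrite -addn1 PoszD in HXn; lia.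
Qed.

End Dhar.


Lemma exists_min (P : nat -> Prop) : (exists n, P n) -> exists n, P n /\ forall m, P m -> (n <= m)%N.
Proof.
move=> [n Pn]; elim: n {-2}n (leqnn n) Pn => [|N IH] n Hn Pn.
  by exists n; split => // m _; move: Hn; rewrite leqn0 => /eqP ->.
case: (classic (exists m, (m < n)%N /\ P m)) => [[m [Hm Pm]]|Hno].
  by apply: (IH m) => //; rewrite -ltnS; apply: leq_trans Hm Hn.
exists n; split => // m Pm; rewrite leqNgt; apply/negP => Hm; apply: Hno; by exists m.
Qed.

Lemma sum_delta (T : finType) (q : T) (c : int) : \sum_(v : T) (v == q)%:Z * c = c.
Proof.
by rewrite (bigD1 q) //= eqxx mul1r big1 ?addr0 // => v /negbTE ->; rewrite mul0r.
Qed.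

Section RRcore.
Variable H : mgraph.
Local Notation V := (vtx H).
Variable q : V.
Hypothesis Hconn : forall v w : V, connect (@adj H) v w.
Hypothesis Hll : forall e : edg H, ~~ is_loop e.

Lemma dichotomy (D : divisor H) : equiv_effective D \/
  exists pi : V -> int, injective pi /\ equiv_effective (fun v => nu pi v - D v).
Proof.
have [D1 [HD1 H1]] := nonneg_offq q Hconn D.
have [D2 [HD2 H2 HR]] := reduce Hconn H1.
have HD := lin_equiv_trans HD1 HD2.
case: (lerP 0 (D2 q)) => Hq.
  left; exists D2; split => // v; case: (eqVneq v q) => [->|vq] //; exact: H2.
right.
have qU : q \notin [set~ q] by rewrite !inE eqxx.
have [pi [Hinj [Hord Hsum]]] := dhar HR qU.
have Hq' : forall w, w != q -> pi q < pi w.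
  by move=> w wq; apply: Hord => //; rewrite !inE.
exists pi; split.
  move=> x y E; case: (eqVneq x q) => [xq|xq]; case: (eqVneq y q) => [yq|yq].
  - by rewrite xq yq.
  - by have := Hq' _ yq; rewrite -xq E ltxx.
  - by have := Hq' _ xq; rewrite -yq E ltxx.
  - by apply: Hinj; rewrite // !inE.
exists (fun v => nu pi v - D2 v); split.
  move=> v; rewrite subr_ge0; case: (eqVneq v q) => [->|vq].
    rewrite /nu big1; first by move: Hq; lia.
    move=> w; case: (eqVneq w q) => [->|wq]; first by rewrite ltxx.
    by rewrite lt_gtF // Hq'.
  have := Hsum v; rewrite !inE vq => /(_ isT); rewrite /nu; lia.
apply: (principal_opp HD) => w /=; ring.
Qed.

Definition Qs (D : divisor H) (n : nat) : Prop :=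
  exists D' (pi : V -> int), [/\ lin_equiv D D', injective pi &
    degp (fun v => D' v - nu pi v) = n].

Lemma charK (D : divisor H) k : rank_prop D k <->
  forall D' (pi : V -> int), lin_equiv D D' -> injective pi ->
    (k < degp (fun v => (D' v - nu pi v)%R))%N.
Proof.
split.
- move=> Hr D' pi HD' Hpi; rewrite ltnNge; apply/negP => Hk.
  pose X : divisor H := fun v => D' v - nu pi v.
  have {}Hk : (degp X <= k)%N := Hk.
  pose E := fun v : V => (pp (X v))%:Z + (v == q)%:Z * (k - degp X)%N%:Z.
  have HE : effective E by move=> v; rewrite /E; apply: addr_ge0 => //; apply: mulr_ge0.
  have dE : deg E = k%:Z.
    rewrite /deg /E big_split /= -(big_morph Posz PoszD (erefl _)) -/(degp X).
    rewrite sum_delta -PoszD subnKC //.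
  have [F [HF HF2]] := Hr E HE dE.
  apply: (nu_not_eff q Hpi).
  exists (fun v => F v + (pp (- X v))%:Z + (v == q)%:Z * (k - degp X)%N%:Z); split.
    move=> v; apply: addr_ge0; last by apply: mulr_ge0.
    by apply: addr_ge0; [exact: HF|].
  apply: (principal_add HF2 (lin_equiv_sym HD')) => v /=.
  have := pp_sub (X v); rewrite /E /X; lia.
- move=> Hall E HE dE.
  case: (classic (equiv_effective (fun v => D v - E v))) => // Hne.
  case: (dichotomy (fun v => D v - E v)) => // [[pi [Hpi [F [HF HF2]]]]].
  pose D' : divisor H := fun v => nu pi v - F v + E v.
  have HD' : lin_equiv D D' by apply: (principal_opp HF2) => w /=; rewrite /D'; ring.
  have := Hall D' pi HD' Hpi.
  have Hle : (degp (fun v => (D' v - nu pi v)%R) <= k)%N.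
    have : (\sum_v pp (E v))%N%:Z = k%:Z.
      rewrite -dE /deg (big_morph Posz PoszD (erefl _)); apply: eq_bigr => v _.
      by rewrite pp_pos.
    move=> [<-]; apply: leq_sum => v _; apply: pp_le; rewrite /D'.
    have := HF v; lra.
  by rewrite ltnNge Hle.
Qed.

Lemma eff_rank0 (D : divisor H) : equiv_effective D <-> rank_prop D 0.
Proof.
split.
- move=> HD E HE dE; apply: equiv_eff_ext HD => v.
  have := @psumr_eq0P _ _ xpredT E (fun i _ => HE i) dE v isT; lra.
- move=> Hr; apply: (equiv_eff_ext _ (Hr (fun _ => 0) (fun _ => lexx 0) _)).
    by move=> v /=; rewrite subr0.
  by rewrite /deg big1.
Qed.

Definition Qmin (D : divisor H) n := Qs D n /\ forall m, Qs D m -> (n <= m)%N.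

Lemma Qs_ex (D : divisor H) : exists n, Qs D n.
Proof.
pose pi := fun v : V => (enum_rank v : nat)%:Z.
have Hpi : injective pi.
  by move=> x y [] /val_inj /enum_rank_inj.
by eexists; exists D, pi; split => //; exact: lin_equiv_refl.
Qed.

Lemma Qmin_ex (D : divisor H) : exists n, Qmin D n.
Proof. exact: exists_min (Qs_ex D). Qed.

Lemma rank_M (D : divisor H) n : Qmin D n -> rank D = n%:Z - 1.
Proof.
move=> [[D0 [pi0 [H0 Hpi0 E0]]] Hmin]; apply: rank_eq.
case: n E0 Hmin => [|k] E0 Hmin.
  left; split => //; move/eff_rank0/charK => /(_ D0 pi0 H0 Hpi0).
  by rewrite E0.
right; split.
  apply/eff_rank0/charK => D' pi HD' Hpi; apply: leq_trans (Hmin _ _) => //.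
  by exists D', pi.
exists k; split; first by rewrite -addn1 PoszD addrK.
split.
  apply/charK => D' pi HD' Hpi; apply: (Hmin _); by exists D', pi.
move=> k' /charK /(_ D0 pi0 H0 Hpi0); by rewrite E0.
Qed.

Lemma Qs_ext (D1 D2 : divisor H) n : (forall v, D1 v = D2 v) -> Qs D1 n -> Qs D2 n.
Proof.
move=> E [D' [pi [HD' Hpi Hn]]]; exists D', pi; split => //.
by apply: (principal_ext HD') => w /=; rewrite E.
Qed.

Lemma Qmin_ext (D1 D2 : divisor H) n : (forall v, D1 v = D2 v) -> Qmin D1 n -> Qmin D2 n.
Proof.
move=> E [H1 H2]; split; first exact: Qs_ext H1.
by move=> m /(Qs_ext (fun v => esym (E v))) /H2.
Qed.

Lemma Q_ineq (D : divisor H) n n' : Qmin D n -> Qmin (fun v => Kc v - D v) n' ->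
  n'%:Z <= n%:Z - deg D + b1 H - 1.
Proof.
move=> [[D0 [pi0 [H0 Hpi0 E0]]] _] [_ Hmin].
have Hpi1 : injective (fun x => - pi0 x) by move=> x y /oppr_inj /Hpi0.
have Q1 : Qs (fun v => Kc v - D v)
   (degp (fun v => (Kc v - D0 v) - nu (fun x => - pi0 x) v)).
  exists (fun v => Kc v - D0 v), (fun x => - pi0 x); split => //.
  by apply: (principal_opp H0) => w /=; ring.
have := Hmin _ Q1; rewrite -lez_nat => Hle; apply: le_trans Hle _.
have -> : degp (fun v => (Kc v - D0 v) - nu (fun x => - pi0 x) v) =
          degp (fun v => - (D0 v - nu pi0 v)).
  by apply: eq_bigr => v _; rewrite -(nu_rev Hll _ Hpi0); congr pp; ring.
rewrite degp_neg E0 deg_sub (lin_equiv_deg H0) (deg_nu Hll Hpi0); lra.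
Qed.

Theorem RR_core (D : divisor H) :
  rank D - rank (fun v => Kc v - D v) = deg D - b1 H + 1.
Proof.
have [n1 Hn1] := Qmin_ex D.
have [n2 Hn2] := Qmin_ex (fun v => Kc v - D v).
have Hn3 : Qmin (fun v => Kc v - (Kc v - D v)) n1.
  by apply: Qmin_ext Hn1 => v; ring.
have i1 := Q_ineq Hn1 Hn2.
have i2 := Q_ineq Hn2 Hn3.
rewrite (rank_M Hn1) (rank_M Hn2).
move: i2; rewrite deg_sub deg_K; lra.
Qed.

End RRcore.


Section Hat.
Variable X : mgraph.
Local Notation Hh := (hat X).

Lemma sum_loop_edge (F : edg X -> nat) :
  (\sum_(l : loop_edge X) F (val l) = \sum_(e | is_loop e) F e)%N.
Proof.
rewrite (reindex_omap (val : loop_edge X -> edg X) insub); last first.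
  by move=> i Pi; rewrite insubT.
apply: eq_bigl => -[i iA] /=; rewrite insubT /=.
by apply/esym/andP; split => //; apply/eqP; congr Some; apply: val_inj; rewrite SubK.
Qed.

Lemma hat_loopless : forall e : edg Hh, ~~ is_loop e.
Proof.
case=> [e0|l]; rewrite /is_loop //=.
by case: insubP => [l _ _|Hn] //=.
Qed.


Lemma val_hat_inl (v : vtx X) : @valency Hh (inl v) = valency v.
Proof.
rewrite /valency big_sumType /=.
have E1 : forall e0 : edg X,
   (((hat_ends (inl e0)).1 == inl v) + ((hat_ends (inl e0)).2 == inl v))%N =
   (((ends e0).1 == v) + (~~ is_loop e0 && ((ends e0).2 == v)))%N.
  move=> e0 /=; case: insubP => [l Hl El|Hn] /=.
    by rewrite Hl andFb addn0.
  by rewrite Hn.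
rewrite (eq_bigr _ (fun e0 _ => E1 e0)) /=.
rewrite (eq_bigr (fun l : loop_edge X => ((ends (val l)).1 == v) : nat)); last by move=> l _.
rewrite (sum_loop_edge (fun e => ((ends e).1 == v) : nat)) [X in (_ + X)%N]big_mkcond -big_split /=.
apply: eq_bigr => e0 _; case: (boolP (is_loop e0)) => /= Hl; last by rewrite addn0.
by rewrite addn0 addnC; move: Hl; rewrite /is_loop => /eqP ->.
Qed.

Lemma val_hat_inr (l : loop_edge X) : @valency Hh (inr l) = 2%N.
Proof.
rewrite /valency big_sumType /=.
have E1 : forall e0 : edg X,
   (((hat_ends (inl e0)).1 == inr l) + ((hat_ends (inl e0)).2 == inr l))%N =
   (e0 == val l)%N.
  move=> e0 /=; case: insubP => [l' Hl El|Hn] /=.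
    by rewrite -El.
  case: (eqVneq e0 (val l)) => // E; move: Hn; rewrite E; by case: l {E} => /= e ->.
rewrite (eq_bigr _ (fun e0 _ => E1 e0)) sum_pred1n.
by rewrite (eq_bigr (fun l' => (l' == l) : nat)) ?sum_pred1n // => l' _ /=; rewrite addn0.
Qed.


Lemma mult_hat_ll (v w : vtx X) : v != w -> @mult Hh (inl v) (inl w) = mult v w.
Proof.
move=> vw; rewrite /mult !card_sumE big_sumType /= [X in (_ + X)%N]big1 ?addn0 //.
apply: eq_bigr => e0 _; case: insubP => [l Hl El|Hn] /=.
  move: Hl; rewrite /is_loop; case: (ends e0) => a b /= /eqP <-.
  rewrite !xpair_eqE /= !andbF /=; symmetry.
  case: (eqVneq a v) => [->|] //=; last by rewrite andbF.
  by case: eqP => //= E; move: vw; rewrite E eqxx.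
by case: (ends e0) => a b /=; rewrite !xpair_eqE.
Qed.

Lemma mult_hat_lr (v : vtx X) (l : loop_edge X) :
  v != (ends (val l)).1 -> @mult Hh (inl v) (inr l) = 0%N.
Proof.
move=> vl; apply: eq_card0 => x; rewrite !inE; case: x => [e0|l'] /=.
  case: insubP => [l'' Hl El|Hn] /=.
    rewrite !xpair_eqE; apply/negP => /orP[/andP[/eqP[E1] /eqP[E2]]|/andP[/eqP//]].
    by move: vl; rewrite -E1 -El E2 eqxx.
  by rewrite !xpair_eqE; apply/negP => /orP[/andP[_ /eqP//]|/andP[/eqP//]].
by apply/negP => /andP[/eqP[E1] /eqP[E2]]; move: vl; rewrite -E2 -E1 eqxx.
Qed.

Lemma mult_hat_rr (l l' : loop_edge X) : @mult Hh (inr l) (inr l') = 0%N.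
Proof.
apply: eq_card0 => x; rewrite !inE; case: x => [e0|l''] /=.
  case: insubP => [l0 Hl El|Hn] /=.
    by apply/negP => /andP[/eqP//].
  by apply/negP => /andP[/eqP//].
by rewrite !xpair_eqE; apply/negP => /orP[/andP[_ /eqP//]|/andP[_ /eqP//]].
Qed.


Lemma hat_principal (P : divisor X) : principal P -> principal (hat_ext P).
Proof.
move=> /principalP[c Hc]; apply/principalP.
exists (fun x : vtx Hh => match x with inl v => c v | inr l => c (ends (val l)).1 end).
move=> [w|l] /=.
  rewrite Hc /lap big_sumType /= [X in _ = _ + X]big1 ?addr0.
    apply: eq_bigr => v _; case: (eqVneq v w) => [->|vw]; first by rewrite !subrr !mulr0.
    have E : (inl v == inl w :> vtx Hh) = (v == w) by [].
    by rewrite /mm E (negbTE vw) mult_hat_ll.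
  move=> l _; case: (eqVneq (ends (val l)).1 w) => [->|ne]; first by rewrite subrr mulr0.
  by rewrite (@mm_sym Hh (inr l) (inl w)) /mm /= mult_hat_lr ?mul0r // eq_sym.
rewrite /lap big_sumType /= !big1 ?addr0 //.
  by move=> l' _; rewrite /mm; case: ifP => _; rewrite ?mult_hat_rr mul0r.
move=> v _; case: (eqVneq v (ends (val l)).1) => [->|ne]; first by rewrite subrr mulr0.
by rewrite /mm /= mult_hat_lr ?mul0r.
Qed.

Lemma deg_hat_ext (D : divisor X) : deg (hat_ext D) = deg D.
Proof. by rewrite /deg big_sumType /= [X in _ + X]big1 ?addr0. Qed.

Lemma b1_hat : b1 Hh = b1 X.
Proof. by rewrite /b1 /= !card_sum !PoszD; ring. Qed.

Lemma hat_adj_ll (x y : vtx X) : adj x y -> connect (@adj Hh) (inl x) (inl y).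
Proof.
case: (eqVneq x y) => [->|xy]; first by rewrite connect0.
move=> /existsP[e He]; apply: connect1; apply/existsP; exists (inl e) => /=.
case: insubP => [l Hl El|Hn] /=.
  move: Hl He; rewrite /is_loop; case: (ends e) => a b /= /eqP ->.
  by rewrite !xpair_eqE => /orP[/andP[/eqP-> /eqP E]|/andP[/eqP-> /eqP E]];
    move: xy; rewrite E eqxx.
by move: He; case: (ends e) => a b /=; rewrite !xpair_eqE.
Qed.

Lemma hat_conn (x0 : vtx X) : (forall v w : vtx X, connect (@adj X) v w) ->
  forall x y : vtx Hh, connect (@adj Hh) x y.
Proof.
move=> HX.
have Hsym : connect_sym (@adj Hh).
  apply: sym_connect_sym => a b; rewrite /adj; apply/existsP/existsP => -[e He]; exists e;
  by rewrite orbC.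
have Hll : forall v w, connect (@adj Hh) (inl v) (inl w).
  move=> v w; have /connectP[p Hp ->] := HX v w.
  elim: p v Hp => [|y p IHp] v /=; first by rewrite connect0.
  move=> /andP[Hvy Hp]; apply: connect_trans (hat_adj_ll Hvy) (IHp _ Hp).
have H0 : forall x, connect (@adj Hh) (inl x0) x.
  case=> [v|l]; first exact: Hll.
  apply: connect_trans (Hll x0 (ends (val l)).1) _.
  apply: connect1; apply/existsP; exists (inr l) => /=.
  by rewrite !xpair_eqE eqxx /=.
by move=> x y; apply: connect_trans (H0 y); rewrite Hsym.
Qed.

End Hat.


Section Virt.
Variable G : mgraph.
Variable om : vtx G -> nat.
Local Notation X := (virt om).

Lemma mm_virt (v w : vtx G) : @mm X v w = mm v w.
Proof.
rewrite /mm; case: (eqVneq v w) => // vw.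
rewrite /mult !card_sumE big_sumType /= [X in (_ + X)%N]big1 ?addn0 //.
move=> nl _; rewrite !xpair_eqE; case: eqP => [E1|] /=; case: eqP => [E2|] //=;
  by move: vw; rewrite -E1 -E2 eqxx.
Qed.

Lemma virt_principal (P : divisor G) : principal P -> @principal X P.
Proof.
move=> /principalP[c Hc]; apply/principalP; exists c => w; rewrite Hc /lap.
by apply: eq_bigr => v _; rewrite mm_virt.
Qed.

Lemma virt_conn : (forall v w : vtx G, connect (@adj G) v w) ->
  forall v w : vtx X, connect (@adj X) v w.
Proof.
move=> HG v w; apply: (@connect_sub (vtx G) (@adj G) (@adj X)); last exact: HG.
move=> x y /existsP[e He]; apply: connect1; apply/existsP; by exists (inl e).
Qed.

Lemma b1_virt : b1 X = wgenus om.
Proof.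
rewrite /wgenus /b1 /= card_sum card_tagged.
have -> : sumn [seq #|'I_(om i)| | i <- enum (vtx G)] = (\sum_(v : vtx G) om v)%N.
  by rewrite sumnE big_map big_enum /=; apply: eq_bigr => v _; rewrite card_ord.
rewrite PoszD (big_morph Posz PoszD (erefl _)); ring.
Qed.

End Virt.

Theorem theorem3p8 (G : mgraph) (om : vtx G -> nat) (HG : connected G) :
  (forall D : divisor G,
     wrank om D - wrank om (fun v => wcanonical om v - D v)
       = deg D - wgenus om + 1) /\
  (forall D D' : divisor G, lin_equiv D D' -> wrank om D = wrank om D').
Proof.
case: HG => HG0 HGc.
have [v0 _] : exists v0 : vtx G, v0 \in predT by apply/card_gt0P.
have HcX := @virt_conn G om HGc.
have HcH := hat_conn (X := virt om) v0 HcX.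
have Hll := @hat_loopless (virt om).
split.
- move=> D; rewrite /wrank /rank_sharp.
  have -> : rank (@hat_ext (virt om) (fun v => wcanonical om v - D v)) =
            rank (fun x => Kc x - @hat_ext (virt om) D x).
    apply: rank_lin; apply: lin_equiv_eq => -[v|l] /=.
      by rewrite /wcanonical /Kc val_hat_inl.
    by rewrite /Kc val_hat_inr subr0.
  rewrite (@RR_core (hat (virt om)) (inl v0) HcH Hll) deg_hat_ext b1_hat b1_virt //.
- move=> D D' HD; rewrite /wrank /rank_sharp; apply: rank_lin.
  apply: (principal_ext (hat_principal (@virt_principal G om _ HD))) => -[v|l] //=.
Qed.
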